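(* Let $d,n\in\mathbb N$ with $n\ge 2$, $Q,K\in\mathbb R^{d\times d}$, $V:=I_d$, and $A:=K^\top Q/\sqrt d$. Assume $A$ has at least one real eigenvalue, and let $\gamma_1\ge\dots\ge\gamma_\delta$ be the real eigenvalues of $A$. Set $\gamma:=\max(-\gamma_\delta,\gamma_1/8)$. Then for every $R>0$, the self-attention map $f$ with parameters $(A,V)$ satisfies $$\mathrm{Lip}\big(f_{|B_R^n}\big)\ge\frac{\sqrt{n-1}}{1+(n-1)e^{-2R^2\gamma}}.$$
   Context: For $X=(x_1,\dots,x_n)\in(\mathbb R^d)^n$, self-attention with parameters $(A,V)$ is $f(X)=\big(V\sum_{j=1}^nP_{ij}x_j\big)_{1\le i\le n}$, where $P_{ij}=\exp(x_i^\top A^\top x_j)/\sum_{l=1}^n\exp(x_i^\top A^\top x_l)$. $(\mathbb R^d)^n$ carries the Frobenius norm $\|X\|_F=(\sum_i|x_i|^2)^{1/2}$. $B_R\subset\mathbb R^d$ is the closed Euclidean ball of center $0$ and radius $R$, and $\mathrm{Lip}(f_{|\mathcal X})=\sup_{X\ne Y\in\mathcal X}\|f(X)-f(Y)\|_F/\|X-Y\|_F$. *)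

(* Defs.v *)
From HB Require Import structures.
From mathcomp Require Import all_boot all_order all_algebra.
From mathcomp Require Import all_classical all_reals all_analysis.
Set Implicit Arguments. Unset Strict Implicit. Unset Printing Implicit Defensive.
Import Order.TTheory GRing.Theory Num.Theory.
Local Open Scope classical_set_scope.
Local Open Scope ring_scope.

(* A configuration X = (x_1,...,x_n) in (R^d)^n is an n x d matrix whose
   i-th row is x_i (as a row vector). *)

(* score i j = x_i^T A^T x_j  (column convention), i.e. x_i A^T x_j^T in rows *)
Definition att_score (R : realType) (n d : nat) (A : 'M[R]_d)
  (X : 'M[R]_(n, d)) (i j : 'I_n) : R :=
  (row i X *m A^T *m (row j X)^T) 0 0.

Definition att_P (R : realType) (n d : nat) (A : 'M[R]_d)
  (X : 'M[R]_(n, d)) (i j : 'I_n) : R :=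
  expR (att_score A X i j) / \sum_(l < n) expR (att_score A X i l).

(* f(X)_i = V (sum_j P_ij x_j); as a row vector: (sum_j P_ij x_j) V^T *)
Definition self_attention (R : realType) (n d : nat) (A V : 'M[R]_d)
  (X : 'M[R]_(n, d)) : 'M[R]_(n, d) :=
  \matrix_(i < n) ((\sum_(j < n) att_P A X i j *: row j X) *m V^T).

Definition frob (R : realType) (n d : nat) (X : 'M[R]_(n, d)) : R :=
  Num.sqrt (\sum_(i < n) \sum_(k < d) X i k ^+ 2).

Definition eucl (R : realType) (d : nat) (x : 'rV[R]_d) : R :=
  Num.sqrt (\sum_(k < d) x 0 k ^+ 2).

Definition ballR_n (R : realType) (n d : nat) (r : R) : set 'M[R]_(n, d) :=
  [set X | forall i : 'I_n, eucl (row i X) <= r].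

Definition Lip_on (R : realType) (n d : nat)
  (f : 'M[R]_(n, d) -> 'M[R]_(n, d)) (S : set 'M[R]_(n, d)) : \bar R :=
  ereal_sup [set e : \bar R | exists X Y, S X /\ S Y /\ X <> Y /\
     e = (frob (f X - f Y) / frob (X - Y))%:E].

(* Main.v *)
Require Import Defs.
From HB Require Import structures.
From mathcomp Require Import all_boot all_order all_algebra.
From mathcomp Require Import all_classical all_reals all_analysis.
From mathcomp.algebra_tactics Require Import ring lra.
Import Order.TTheory GRing.Theory Num.Theory.
Local Open Scope ring_scope.

Section S.
Variables (R : realType) (n d : nat) (A : 'M[R]_d) (lam : R) (u : 'rV[R]_d).
Hypothesis hu : u *m A = lam *: u.
Hypothesis hu1 : \sum_(k < d) u 0 k ^+ 2 = 1.

Definition cfg (s : 'I_n -> R) : 'M[R]_(n, d) := \matrix_(i, k) (s i * u 0 k).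

Lemma row_cfg s i : row i (cfg s) = s i *: u.
Proof. by apply/rowP => k; rewrite !mxE. Qed.

Lemma quad : (u *m A^T *m u^T) 0 0 = lam.
Proof.
have -> : (u *m A^T *m u^T) 0 0 = (u *m A^T *m u^T)^T 0 0 by rewrite [in RHS]mxE.
rewrite !trmx_mul !trmxK mulmxA hu -scalemxAl mxE mxE.
rewrite -[RHS]mulr1 -hu1; congr (_ * _); apply: eq_bigr => k _.
by rewrite mxE expr2.
Qed.

Lemma score_cfg s i j : att_score A (cfg s) i j = lam * s i * s j.
Proof.
rewrite /att_score !row_cfg -scalemxAl linearZ /= -scalemxAr -scalemxAl.
rewrite !mxE; have := quad; rewrite [X in X = _]mxE => ->.
by rewrite mulrC [s i * _]mulrC.
Qed.

Lemma sa_cfg s i k : self_attention A 1%:M (cfg s) i k =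
  (\sum_j att_P A (cfg s) i j * s j) * u 0 k.
Proof.
rewrite /self_attention mxE trmx1 mulmx1 summxE mulr_suml.
apply: eq_bigr => j _; by rewrite !mxE mulrA.
Qed.

Lemma sumP s i : \sum_j att_P A (cfg s) i j = 1.
Proof.
rewrite /att_P -mulr_suml mulfV // lt0r_neq0 //.
rewrite (bigD1 i) //= ltr_pwDl ?expR_gt0 // sumr_ge0 // => l _.

Qed.

Lemma fY b i k : self_attention A 1%:M (cfg (fun _ => b)) i k = b * u 0 k.
Proof. by rewrite sa_cfg -mulr_suml sumP mul1r. Qed.

Variables (a b : R) (i1 : 'I_n).
Definition sX := fun i : 'I_n => if i == i1 then a else b.
Definition pp := (1 + (n.-1)%:R * expR (lam * b * (b - a)))^-1.

Lemma fX i k : i != i1 ->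
  self_attention A 1%:M (cfg sX) i k = (b + pp * (a - b)) * u 0 k.
Proof.
move=> hi; rewrite sa_cfg; congr (_ * _).
have -> : \sum_j att_P A (cfg sX) i j * sX j =
   \sum_j att_P A (cfg sX) i j * b + \sum_j att_P A (cfg sX) i j * (sX j - b).
  by rewrite -big_split /=; apply: eq_bigr => j _; rewrite -mulrDr addrCA subrr addr0.
rewrite -mulr_suml sumP mul1r; congr (_ + _).
rewrite (bigD1 i1) //= big1 ?addr0; last first.
  by move=> j hj; rewrite /sX (negbTE hj) subrr mulr0.
rewrite /sX eqxx; congr (_ * _).
rewrite /att_P /pp (bigD1 i1) //=.
have -> : \sum_(l < n | l != i1) expR (att_score A (cfg sX) i l)
   = expR (lam * b * b) *+ n.-1.
  rewrite (eq_bigr (fun _ => expR (lam * b * b))); last first.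
    by move=> l hl; rewrite score_cfg /sX (negbTE hi) (negbTE hl).
  by rewrite sumr_const cardC1 card_ord.
rewrite !score_cfg /sX (negbTE hi) eqxx.
rewrite mulrBr expRB -mulr_natr.
have h1 : 0 < expR (lam * b * a) by apply: expR_gt0.
have h2 : 0 < expR (lam * b * b) by apply: expR_gt0.
set E1 := expR (lam * b * a) in h1 *; set E2 := expR (lam * b * b) in h2 *.
have hm : 0 <= (n.-1)%:R :> R by [].
field; apply/andP; split; apply: lt0r_neq0 => //.
by apply: ltr_pwDl => //; apply: mulr_ge0 => //; apply: ltW.
Qed.

Lemma sum_sq_scale (c : R) : \sum_(k < d) (c * u 0 k) ^+ 2 = c ^+ 2.
Proof.
rewrite (eq_bigr (fun k => c ^+ 2 * u 0 k ^+ 2)); last by move=> k _; rewrite exprMn.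
by rewrite -mulr_sumr hu1 mulr1.
Qed.

Lemma frobXY : frob (cfg sX - cfg (fun _ => b)) = `|a - b|.
Proof.
rewrite /frob (eq_bigr (fun i => (sX i - b) ^+ 2)); last first.
  move=> i _; rewrite -sum_sq_scale; apply: eq_bigr => k _.
  by rewrite !mxE mulrBl.
rewrite (bigD1 i1) //= big1 ?addr0 ?sqrtr_sqr /sX ?eqxx //.
by move=> i /negbTE ->; rewrite subrr expr0n.
Qed.

Lemma pp_gt0 : 0 < pp.
Proof.
rewrite /pp invr_gt0 ltr_pwDl // mulr_ge0 //; exact: expR_ge0.
Qed.

Lemma frobF : Num.sqrt (n.-1)%:R * pp * `|a - b| <=
  frob (self_attention A 1%:M (cfg sX) - self_attention A 1%:M (cfg (fun _ => b))).
Proof.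
have hx : 0 <= Num.sqrt (n.-1)%:R * pp * `|a - b|.
  by apply: mulr_ge0 => //; apply: mulr_ge0; [apply: sqrtr_ge0 | apply: ltW; apply: pp_gt0].
rewrite -(ger0_norm hx) -sqrtr_sqr /frob ler_sqrt; last first.
  by apply: sumr_ge0 => i _; apply: sumr_ge0 => k _; apply: sqr_ge0.
rewrite (bigD1 i1) //= -[X in X <= _]add0r lerD //.
  by apply: sumr_ge0 => k _; apply: sqr_ge0.
rewrite (eq_bigr (fun i => (pp * (a - b)) ^+ 2)); last first.
  move=> i hi; rewrite -sum_sq_scale; apply: eq_bigr => k _.
  have -> : forall M N : 'M[R]_(n, d), (M - N) i k = M i k - N i k by move=> M N; rewrite !mxE.
  by rewrite fX // fY -mulrBl addrAC subrr add0r.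
rewrite sumr_const cardC1 card_ord !exprMn sqr_sqrtr // real_normK ?num_real //.
by rewrite -mulrA mulr_natl.
Qed.

Lemma ball_cfg (s : 'I_n -> R) r : (forall i, `|s i| <= r) -> @ballR_n R n d r (cfg s).
Proof.
move=> hs i; rewrite /eucl (eq_bigr (fun k => (s i * u 0 k) ^+ 2)); last first.
  by move=> k _; rewrite row_cfg !mxE.
by rewrite sum_sq_scale sqrtr_sqr.
Qed.

Lemma key r : a != b -> `|a| <= r -> `|b| <= r ->
  ((Num.sqrt (n.-1)%:R * pp)%:E <= Lip_on (self_attention A 1%:M) (@ballR_n R n d r))%E.
Proof.
move=> hab ha hb.
have hne : 0 < `|a - b| by rewrite normr_gt0 subr_eq0.
apply: (@le_trans _ _ ((frob (self_attention A 1%:M (cfg sX) -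
    self_attention A 1%:M (cfg (fun _ => b))) / frob (cfg sX - cfg (fun _ => b)))%:E)).
  by rewrite lee_fin frobXY ler_pdivlMr // frobF.
apply: ereal_sup_ubound; exists (cfg sX), (cfg (fun _ => b)); split.
  by apply: ball_cfg => i; rewrite /sX; case: (i == i1).
split; first by apply: ball_cfg.
split=> //.
move=> E; move: hne; rewrite -frobXY E subrr /frob big1 ?sqrtr0 ?ltxx // => i _.
by rewrite big1 // => k _; rewrite mxE expr0n.
Qed.
End S.

Lemma normalize (R : realType) (d : nat) (A : 'M[R]_d) lam :
  eigenvalue A lam -> exists u : 'rV[R]_d, u *m A = lam *: u /\ \sum_(k < d) u 0 k ^+ 2 = 1.
Proof.
move=> /eigenvalueP [v hv vn0].
set c := \sum_(k < d) v 0 k ^+ 2.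
have c0 : 0 < c.
  rewrite lt0r sumr_ge0 ?andbT; last by move=> k _; apply: sqr_ge0.
  apply: contra vn0 => /eqP /psumr_eq0P h; apply/eqP/rowP => k.
  rewrite mxE; apply/eqP; rewrite -sqrf_eq0; apply/eqP; apply: h => //.
  by move=> j _; apply: sqr_ge0.
exists ((Num.sqrt c)^-1 *: v); split; first by rewrite -scalemxAl hv !scalerA mulrC.
rewrite (eq_bigr (fun k => (Num.sqrt c)^-2 * v 0 k ^+ 2)); last first.
  by move=> k _; rewrite mxE exprMn exprVn.
by rewrite -mulr_sumr sqr_sqrtr ?ltW // mulVf // gt_eqF.
Qed.

Theorem mainTheorem2 (R : realType) (d n : nat) (Q K : 'M[R]_d)
  (gamma1 gammad : R) :
  (2 <= n)%N ->
  let A := (Num.sqrt (d%:R : R))^-1 *: (K^T *m Q) in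
  (* gamma1 / gammad: largest / smallest real eigenvalue of A
     (their existence encodes "A has at least one real eigenvalue") *)
  eigenvalue A gamma1 -> eigenvalue A gammad ->
  (forall a : R, eigenvalue A a -> gammad <= a <= gamma1) ->
  let gamma := Num.max (- gammad) (gamma1 / 8) in
  forall r : R, 0 < r ->
  ((Num.sqrt ((n - 1)%N%:R : R) /
      (1 + (n - 1)%N%:R * expR (- (2 * r ^+ 2 * gamma))))%:E
   <= Lip_on (@self_attention R n d A 1%:M) (@ballR_n R n d r))%E.
Proof.
move=> hn A e1 ed _ gamma r r0.
have n0 : (0 < n)%N by apply: leq_trans hn.
pose i1 := Ordinal n0.
rewrite subn1.
have hr : `|r| <= r by rewrite ger0_norm // ltW.
rewrite /gamma; case: (leP (- gammad) (gamma1 / 8)) => hg.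
- have [u [hu hu1]] := @normalize _ _ _ _ e1.
  have := @key R n d A _ u hu hu1 r (r / 2) i1 r.
  rewrite /pp.
  have -> : gamma1 * (r / 2) * (r / 2 - r) = - (2 * r ^+ 2 * (gamma1 / 8)).
    by rewrite expr2; field.
  apply.
  + rewrite -subr_eq0; have : 0 < r - r / 2 by rewrite subr_gt0 ltr_pdivrMr // ltr_pMr //; lra.
    by move=> h; rewrite gt_eqF.
  + by [].
  + rewrite ger0_norm ?divr_ge0 ?ltW //; lra.
- have [u [hu hu1]] := @normalize _ _ _ _ ed.
  have := @key R n d A _ u hu hu1 (- r) r i1 r.
  rewrite /pp.
  have -> : gammad * r * (r - - r) = - (2 * r ^+ 2 * - gammad).
    by rewrite expr2; ring.
  apply.
  + by rewrite lt_eqF //; lra.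
  + by rewrite normrN.
  + by [].
Qed.
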